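(* Assume (A1)–(A4). Then $T(x)<T^*$ for all $x\in B_{R^*}$.
   Context: Let $p>1$ and $\mu>0$ with $p<1+2/\mu$, and let $R^*,T^*>0$. Write $B_R=\{x\in\mathbb{R}:|x|<R\}$. Fix $\gamma_1,\gamma_2>0$ with $\gamma_1+\gamma_2>\max\big(1,(\mu p 2^p)^{1/(p-1)}\big)$ and let $T_1=\frac{1}{(p-1)\mu}\ln\Big(\frac{2^{1-p}/\mu}{2^{1-p}/\mu-(\gamma_1+\gamma_2)^{1-p}}\Big)$, the finite blow-up time of the solution of $\hat\phi'=\hat\psi'=2^{-p}|\hat\phi+\hat\psi|^p-\frac{\mu}{2}(\hat\phi+\hat\psi)$, $\hat\phi(0)=\gamma_1$, $\hat\psi(0)=\gamma_2$. Assumptions on the real functions $f,g$: (A1) $T_1<T^*$. (A2) $f\ge\gamma_1$, $g\ge\gamma_2$ on $B_{R^*+T^*}$. (A3) $f,g\in\mathcal{C}^4(\overline{B_{R^*+T^*}})$. (A4) There is $\varepsilon_0>0$ with $2^{-p}(\gamma_1+\gamma_2)^p-\frac{\mu}{2}(\gamma_1+\gamma_2)\ge(2+\varepsilon_0)\max_{x\in B_{R^*+T^*}}(|f'(x)|+|g'(x)|)$. Let $K_{R^*,T^*}=\{(x,t):t>0,\ |x-x_0|<T^*-t\ \text{for some } x_0\in B_{R^*}\}$. Define iterates $\phi_0\equiv\gamma_1$, $\psi_0\equiv\gamma_2$ and, with $\mathcal{N}_n(x,s)=2^{-p}|\phi_n+\psi_n|^p(x,s)-\frac{\mu}{1+s}\frac{(\phi_n+\psi_n)(x,s)}{2}$,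 $\phi_{n+1}(x,t)=f(x+t)+\int_0^t\mathcal{N}_n(x+t-s,s)\,ds$, $\psi_{n+1}(x,t)=g(x-t)+\int_0^t\mathcal{N}_n(x-t+s,s)\,ds$. Set $\phi=\sup_n\phi_n$, $\psi=\sup_n\psi_n$ on $K_{R^*,T^*}$, and let $T(x)$, $x\in B_{R^*}$, be the blow-up time of $\phi+\psi$ at $x$, i.e. the supremum of $t>0$ such that $(\phi+\psi)(x,\tau)<\infty$ for $\tau<t$. *)

(* Defs.v *)
From Stdlib Require Import Reals.
From Coquelicot Require Import Coquelicot.
Open Scope R_scope.

(* |u|^p for p > 0, with the correct value 0 at u = 0
   (Stdlib's Rpower 0 p = 1, so we guard it). *)
Definition powabs (u p : R) : R :=
  if Rlt_dec 0 (Rabs u) then Rpower (Rabs u) p else 0.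

Definition Nl (p mu : R) (ph ps : R -> R -> R) (y s : R) : R :=
  Rpower 2 (- p) * powabs (ph y s + ps y s) p
  - mu / (1 + s) * ((ph y s + ps y s) / 2).

Fixpoint iterates (p mu g1 g2 : R) (f g : R -> R) (n : nat)
  : (R -> R -> R) * (R -> R -> R) :=
  match n with
  | O => (fun _ _ => g1, fun _ _ => g2)
  | S m =>
      let pr := iterates p mu g1 g2 f g m in
      let N := Nl p mu (fst pr) (snd pr) in
      (fun x t => f (x + t) + RInt (fun s => N (x + t - s) s) 0 t,
       fun x t => g (x - t) + RInt (fun s => N (x - t + s) s) 0 t)
  end.

Definition phi_n p mu g1 g2 f g n := fst (iterates p mu g1 g2 f g n).
Definition psi_n p mu g1 g2 f g n := snd (iterates p mu g1 g2 f g n).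

Definition phi_sup p mu g1 g2 f g (x t : R) : Rbar :=
  Sup_seq (fun n => phi_n p mu g1 g2 f g n x t).
Definition psi_sup p mu g1 g2 f g (x t : R) : Rbar :=
  Sup_seq (fun n => psi_n p mu g1 g2 f g n x t).

(* Blow-up time at x in B_{R*}: sup of t in (0,T*] (so that (x,tau) stays in
   K_{R*,T*}) such that (phi+psi)(x,tau) < +oo for all 0 < tau < t. *)
Definition blowup_time p mu g1 g2 f g (Tstar x : R) : Rbar :=
  Lub_Rbar (fun t => 0 < t <= Tstar /\
    forall tau, 0 < tau < t ->
      Rbar_lt (Rbar_plus (phi_sup p mu g1 g2 f g x tau)
                         (psi_sup p mu g1 g2 f g x tau)) p_infty).

Definition T1 (p mu g1 g2 : R) : R :=
  / ((p - 1) * mu) *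
  ln ((Rpower 2 (1 - p) / mu) /
      (Rpower 2 (1 - p) / mu - Rpower (g1 + g2) (1 - p))).

Definition C4_closed_ball (r : R) (f : R -> R) : Prop :=
  (forall x, Rabs x <= r ->
     filterlim f (within (fun y => Rabs y <= r) (locally x)) (locally (f x))) /\
  (forall k x, (k < 4)%nat -> Rabs x < r -> ex_derive (Derive_n f k) x) /\
  (forall k, (k <= 4)%nat -> exists h : R -> R,
     (forall x, Rabs x < r -> h x = Derive_n f k x) /\
     (forall x, Rabs x <= r ->
        filterlim h (within (fun y => Rabs y <= r) (locally x)) (locally (h x)))).

(* Main.v *)
Require Import Defs.
From Stdlib Require Import Reals Lra Lia.
From Coquelicot Require Import Coquelicot.
Open Scope R_scope.

Lemma powabs_cont p : 0 < p -> forall u, continuity_pt (fun u => powabs u p) u.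
Proof.
intros Hp u.
destruct (Req_dec u 0) as [->|Hu].
- intros eps Heps. exists (Rpower eps (/ p)). split.
  + unfold Rpower. apply exp_pos.
  + intros x [_ Hx]. simpl in *. unfold R_dist in *.
    unfold powabs at 2. rewrite Rabs_R0. destruct (Rlt_dec 0 0); [lra|].
    rewrite Rminus_0_r in *. unfold powabs. destruct (Rlt_dec 0 (Rabs x)).
    * rewrite Rabs_pos_eq by (unfold Rpower; left; apply exp_pos).
      replace eps with (Rpower (Rpower eps (/p)) p).
      2:{ rewrite Rpower_mult. rewrite Rinv_l by lra. apply Rpower_1; lra. }
      apply Rlt_Rpower_l; lra.
    * rewrite Rabs_R0; lra.
- apply continuity_pt_filterlim.
  apply filterlim_ext_loc with (f := fun v => Rpower (Rabs v) p).
  + assert (H: 0 < Rabs u) by (apply Rabs_pos_lt; auto).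
    exists (mkposreal _ H). intros v Hv.
    change (Rabs (v - u) < Rabs u) in Hv.
    unfold powabs. destruct (Rlt_dec 0 (Rabs v)); auto.
    exfalso. apply n. 
    assert (Rabs u <= Rabs v + Rabs (v - u)).
    { replace u with (v - (v - u)) at 1 by ring. 
      eapply Rle_trans. apply Rabs_triang. rewrite Rabs_Ropp. lra. }
    lra.
  + unfold powabs. destruct (Rlt_dec 0 (Rabs u)).
    2:{ exfalso. apply n. apply Rabs_pos_lt; auto. }
    apply (continuity_pt_filterlim (fun v => Rpower (Rabs v) p)).
    apply (continuity_pt_comp Rabs (fun x => Rpower x p)).
    apply Rcontinuity_abs.
    apply derivable_continuous_pt. exists (p * Rpower (Rabs u) (p - 1)).
    apply derivable_pt_lim_power. auto.
Qed.

Definition clip (r y : R) := (Rabs (y + r) - Rabs (y - r)) / 2.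

Lemma clip_in r y : 0 <= r -> Rabs (clip r y) <= r.
Proof.
intros Hr. unfold clip.
destruct (Rle_dec 0 (y + r)); destruct (Rle_dec 0 (y - r));
 [rewrite (Rabs_pos_eq (y+r)), (Rabs_pos_eq (y-r)) by lra
 |rewrite (Rabs_pos_eq (y+r)), (Rabs_left (y-r)) by lra
 |rewrite (Rabs_left (y+r)), (Rabs_pos_eq (y-r)) by lra
 |rewrite (Rabs_left (y+r)), (Rabs_left (y-r)) by lra];
 apply Rabs_le; lra.
Qed.

Lemma clip_id r y : Rabs y <= r -> clip r y = y.
Proof.
intros H. apply Rabs_le_between in H. unfold clip.
rewrite (Rabs_pos_eq (y+r)) by lra. rewrite (Rabs_left1 (y-r)) by lra. field.
Qed.

Lemma clip_cont r y : continuity_pt (clip r) y.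
Proof.
unfold clip. reg.
Qed.

Lemma clipped_cont (f : R -> R) r :
  0 <= r ->
  (forall x, Rabs x <= r ->
     filterlim f (within (fun y => Rabs y <= r) (locally x)) (locally (f x))) ->
  forall y, continuity_pt (fun y => f (clip r y)) y.
Proof.
intros Hr Hf y. apply continuity_pt_filterlim.
eapply filterlim_comp. 2: apply Hf, clip_in, Hr.
intros P HP. unfold filtermap. unfold within in HP.
pose proof (proj1 (continuity_pt_filterlim _ _) (clip_cont r y) _ HP) as H. eapply filter_imp. 2: exact H. simpl. intros z Hz. apply Hz. apply clip_in; auto.
Qed.

Lemma c2_comp (h u v : R -> R -> R) y t :
  continuity_2d_pt u y t -> continuity_2d_pt v y t ->
  continuity_2d_pt h (u y t) (v y t) ->
  continuity_2d_pt (fun a b => h (u a b) (v a b)) y t.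
Proof.
intros Hu Hv Hh. apply continuity_2d_pt_filterlim.
apply continuity_2d_pt_filterlim in Hu.
apply continuity_2d_pt_filterlim in Hv.
apply continuity_2d_pt_filterlim in Hh.
apply (continuous_comp_2 (fun z : R * R => u (fst z) (snd z)) (fun z : R * R => v (fst z) (snd z)) h (y, t)); auto.
Qed.

Lemma c2_to_1 (k : R -> R -> R) a s :
  continuity_2d_pt k a s -> continuity_pt (k a) s.
Proof.
intros H. apply continuity_pt_filterlim.
apply continuity_2d_pt_filterlim in H.
apply (continuous_comp_2 (fun _ : R => a) (fun s : R => s) k s); auto.
apply continuous_const. apply continuous_id.
Qed.

Lemma ex_RInt_c (h : R -> R) a b : (forall s, continuity_pt h s) -> ex_RInt h a b.
Proof.
intros H. apply (ex_RInt_continuous (V := R_CompleteNormedModule)). intros z _. apply continuity_pt_filterlim. apply H.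
Qed.

Lemma abs_RInt_0 (h : R -> R) t M : (forall s, continuity_pt h s) ->
  (forall s, Rabs s <= Rabs t -> Rabs (h s) <= M) -> Rabs (RInt h 0 t) <= Rabs t * M.
Proof.
intros Hc Hb.
destruct (Rle_dec 0 t).
- rewrite (Rabs_pos_eq t) by auto. replace t with (t - 0) at 2 by ring.
  apply abs_RInt_le_const; auto. apply ex_RInt_c; auto.
  intros s Hs. apply Hb. rewrite !Rabs_pos_eq; lra.
- rewrite <- (opp_RInt_swap h t 0). 2: apply ex_RInt_c; auto.
  change (Rabs (- RInt h t 0) <= Rabs t * M). rewrite Rabs_Ropp.
  rewrite (Rabs_left t) by lra. replace (-t) with (0 - t) by ring.
  apply abs_RInt_le_const; auto. lra. apply ex_RInt_c; auto.
  intros s Hs. apply Hb. rewrite (Rabs_left t) by lra. apply Rabs_le; lra.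
Qed.

Lemma param_cont (k : R -> R -> R) (Hk : forall a s, continuity_2d_pt k a s) a0 t0 :
  continuity_2d_pt (fun a t => RInt (k a) 0 t) a0 t0.
Proof.
intros eps.
set (T := Rabs t0 + 1).
assert (HT : 0 < T) by (unfold T; pose proof (Rabs_pos t0); lra).
assert (He : 0 < eps / (2 * T)) by (apply Rdiv_lt_0_compat; [apply cond_pos| lra]).
destruct (uniform_continuity_2d k (a0-1) (a0+1) (-T) T (fun x y _ _ => Hk x y) (mkposreal _ He)) as [d1 Hd1].
assert (HK : continuity_pt (fun z => RInt (k a0) 0 z) t0).
{ apply continuity_pt_filterlim.
  apply (continuous_RInt_1 (k a0) 0 t0 (fun z => RInt (k a0) 0 z)).
  apply filter_forall. intros z. apply (RInt_correct (V := R_CompleteNormedModule)). apply ex_RInt_c.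
  intros s; apply c2_to_1; auto. }
assert (He2 : 0 < eps / 2) by (pose proof (cond_pos eps); lra).
destruct (HK (eps/2) He2) as [alp [Halp Hd2]].
assert (Hd : 0 < Rmin d1 (Rmin alp 1)).
{ apply Rmin_pos. apply cond_pos. apply Rmin_pos; lra. }
exists (mkposreal _ Hd). simpl. intros a t Ha Ht.
assert (Ha1 : Rabs (a - a0) < d1) by (eapply Rlt_le_trans; [exact Ha| apply Rmin_l]).
assert (Ht2 : Rabs (t - t0) < alp) by (eapply Rlt_le_trans; [exact Ht| eapply Rle_trans; [apply Rmin_r| apply Rmin_l]]).
assert (Ht3 : Rabs (t - t0) < 1) by (eapply Rlt_le_trans; [exact Ht| eapply Rle_trans; [apply Rmin_r| apply Rmin_r]]).
assert (HtT : Rabs t < T).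
{ unfold T. replace t with (t0 + (t - t0)) by ring. eapply Rle_lt_trans. apply Rabs_triang. lra. }
assert (Hai : Rabs (a - a0) < 1) by (eapply Rlt_le_trans; [exact Ha| eapply Rle_trans; [apply Rmin_r| apply Rmin_r]]).
assert (E1 : Rabs (RInt (k a) 0 t - RInt (k a0) 0 t) <= Rabs t * (eps / (2*T))).
{ assert (Hc : forall b s, continuity_pt (k b) s) by (intros; apply c2_to_1; auto).
  rewrite <- (RInt_minus (k a) (k a0)) by (apply ex_RInt_c; auto).
  apply abs_RInt_0.
  - intros s. apply continuity_pt_minus; auto.
  - intros s Hs. left. unfold minus, plus, opp; simpl. 
    apply (Hd1 a0 s a s).
    + lra.
    + apply Rabs_le_between. lra.
    + apply Rabs_lt_between in Hai. lra.
    + apply Rabs_le_between. lra.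
    + auto.
    + unfold Rminus. rewrite Rplus_opp_r, Rabs_R0. apply cond_pos. }
assert (E2 : Rabs (RInt (k a0) 0 t - RInt (k a0) 0 t0) < eps / 2).
{ destruct (Req_dec t t0) as [->|Hne].
  - unfold Rminus. rewrite Rplus_opp_r, Rabs_R0. lra.
  - apply (Hd2 t). split; [split; [exact I| auto] | exact Ht2]. }
assert (E3 : Rabs t * (eps / (2*T)) < eps / 2).
{ apply Rlt_le_trans with (T * (eps / (2 * T))).
  apply Rmult_lt_compat_r; auto. right; field; lra. }
replace (RInt (k a) 0 t - RInt (k a0) 0 t0) with
  ((RInt (k a) 0 t - RInt (k a0) 0 t) + (RInt (k a0) 0 t - RInt (k a0) 0 t0)) by ring.
eapply Rle_lt_trans. apply Rabs_triang. lra.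
Qed.

Definition MNl (p mu : R) (ph ps : R -> R -> R) (y s : R) : R :=
  Rpower 2 (- p) * powabs (ph y s + ps y s) p
  - mu / (1 + Rabs s) * ((ph y s + ps y s) / 2).

Fixpoint Miter (p mu g1 g2 : R) (f g : R -> R) (n : nat)
  : (R -> R -> R) * (R -> R -> R) :=
  match n with
  | O => (fun _ _ => g1, fun _ _ => g2)
  | S m =>
      let pr := Miter p mu g1 g2 f g m in
      let N := MNl p mu (fst pr) (snd pr) in
      (fun x t => f (x + t) + RInt (fun s => N (x + t - s) s) 0 t,
       fun x t => g (x - t) + RInt (fun s => N (x - t + s) s) 0 t)
  end.

Lemma MNl_cont p mu ph ps : 0 < p ->
  (forall y s, continuity_2d_pt ph y s) -> (forall y s, continuity_2d_pt ps y s) ->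
  forall y s, continuity_2d_pt (MNl p mu ph ps) y s.
Proof.
intros Hp H1 H2 y s. unfold MNl.
assert (HS : continuity_2d_pt (fun u v => ph u v + ps u v) y s) by (apply continuity_2d_pt_plus; auto).
apply continuity_2d_pt_minus.
- apply continuity_2d_pt_mult. apply continuity_2d_pt_const.
  apply (continuity_1d_2d_pt_comp (fun u => powabs u p)); auto. apply powabs_cont; auto.
- apply continuity_2d_pt_mult.
  + apply (continuity_1d_2d_pt_comp (fun v => mu / (1 + Rabs v)) (fun u v => v)).
    * apply continuity_pt_div. apply continuity_pt_const. intros a b; auto.
      apply continuity_pt_plus. apply continuity_pt_const. intros a b; auto.
      apply Rcontinuity_abs. pose proof (Rabs_pos s). lra.
    * apply continuity_2d_pt_id2.
  + apply (continuity_1d_2d_pt_comp (fun v => v / 2)); auto. reg.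
Qed.

Lemma Miter_cont p mu g1 g2 f g : 0 < p ->
  (forall y, continuity_pt f y) -> (forall y, continuity_pt g y) ->
  forall n y t, continuity_2d_pt (fst (Miter p mu g1 g2 f g n)) y t /\
                continuity_2d_pt (snd (Miter p mu g1 g2 f g n)) y t.
Proof.
intros Hp Hf Hg n. induction n as [|n IH]; intros y t.
- simpl. split; apply continuity_2d_pt_const.
- assert (HN := MNl_cont p mu _ _ Hp (fun y t => proj1 (IH y t)) (fun y t => proj2 (IH y t))).
  set (N := MNl p mu (fst (Miter p mu g1 g2 f g n)) (snd (Miter p mu g1 g2 f g n))) in *.
  simpl. fold N. split.
  + apply continuity_2d_pt_plus.
    * apply (continuity_1d_2d_pt_comp f (fun a b => a + b)). apply Hf.
      apply continuity_2d_pt_plus. apply continuity_2d_pt_id1. apply continuity_2d_pt_id2.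
    * apply (c2_comp (fun a t => RInt (fun s => N (a - s) s) 0 t) (fun a b => a + b) (fun a b => b)).
      apply continuity_2d_pt_plus. apply continuity_2d_pt_id1. apply continuity_2d_pt_id2.
      apply continuity_2d_pt_id2.
      apply (param_cont (fun a s => N (a - s) s)).
      intros a s. apply (c2_comp N (fun a s => a - s) (fun a s => s)).
      apply continuity_2d_pt_minus. apply continuity_2d_pt_id1. apply continuity_2d_pt_id2.
      apply continuity_2d_pt_id2. apply HN.
  + apply continuity_2d_pt_plus.
    * apply (continuity_1d_2d_pt_comp g (fun a b => a - b)). apply Hg.
      apply continuity_2d_pt_minus. apply continuity_2d_pt_id1. apply continuity_2d_pt_id2.
    * apply (c2_comp (fun a t => RInt (fun s => N (a + s) s) 0 t) (fun a b => a - b) (fun a b => b)).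
      apply continuity_2d_pt_minus. apply continuity_2d_pt_id1. apply continuity_2d_pt_id2.
      apply continuity_2d_pt_id2.
      apply (param_cont (fun a s => N (a + s) s)).
      intros a s. apply (c2_comp N (fun a s => a + s) (fun a s => s)).
      apply continuity_2d_pt_plus. apply continuity_2d_pt_id1. apply continuity_2d_pt_id2.
      apply continuity_2d_pt_id2. apply HN.
Qed.

Lemma Miter_agree p mu g1 g2 f g (r : R) :
  (forall y, Rabs y <= r -> clip r y = y) ->
  forall n y t, 0 <= t -> Rabs y + t <= r ->
    fst (Miter p mu g1 g2 (fun y => f (clip r y)) (fun y => g (clip r y)) n) y t
      = phi_n p mu g1 g2 f g n y t /\
    snd (Miter p mu g1 g2 (fun y => f (clip r y)) (fun y => g (clip r y)) n) y t
      = psi_n p mu g1 g2 f g n y t.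
Proof.
intros Hc n. unfold phi_n, psi_n. induction n as [|n IH]; intros y t Ht Hyt.
- simpl. auto.
- simpl. split; f_equal.
  + f_equal. apply Hc. eapply Rle_trans. apply Rabs_triang. rewrite (Rabs_pos_eq t); lra.
  + apply RInt_ext. rewrite Rmin_left, Rmax_right by lra. intros s Hs.
    unfold MNl, Nl. rewrite (Rabs_pos_eq s) by lra.
    assert (Hd : Rabs (y + t - s) + s <= r).
    { replace (y + t - s) with (y + (t - s)) by ring.
      pose proof (Rabs_triang y (t - s)). rewrite (Rabs_pos_eq (t - s)) in H by lra. lra. }
    destruct (IH (y + t - s) s ltac:(lra) Hd) as [E1 E2]. rewrite E1, E2. reflexivity.
  + f_equal. apply Hc. unfold Rminus. eapply Rle_trans. apply Rabs_triang. rewrite Rabs_Ropp, (Rabs_pos_eq t); lra.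
  + apply RInt_ext. rewrite Rmin_left, Rmax_right by lra. intros s Hs.
    unfold MNl, Nl. rewrite (Rabs_pos_eq s) by lra.
    assert (Hd : Rabs (y - t + s) + s <= r).
    { replace (y - t + s) with (y + - (t - s)) by ring.
      pose proof (Rabs_triang y (- (t - s))). rewrite Rabs_Ropp, (Rabs_pos_eq (t - s)) in H by lra. lra. }
    destruct (IH (y - t + s) s ltac:(lra) Hd) as [E1 E2]. rewrite E1, E2. reflexivity.
Qed.

Lemma Nint p mu g1 g2 f g r : 0 < p -> 0 <= r ->
  (forall x, Rabs x <= r ->
     filterlim f (within (fun y => Rabs y <= r) (locally x)) (locally (f x))) ->
  (forall x, Rabs x <= r ->
     filterlim g (within (fun y => Rabs y <= r) (locally x)) (locally (g x))) ->
  forall n y t a b, 0 <= t -> Rabs y + t <= r -> 0 <= a -> a <= b -> b <= t ->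
  ex_RInt (fun s => Nl p mu (phi_n p mu g1 g2 f g n) (psi_n p mu g1 g2 f g n) (y + t - s) s) a b /\
  ex_RInt (fun s => Nl p mu (phi_n p mu g1 g2 f g n) (psi_n p mu g1 g2 f g n) (y - t + s) s) a b.
Proof.
intros Hp Hr Hf Hg n y t a b Ht Hyt Ha Hab Hb.
pose proof (Miter_cont p mu g1 g2 _ _ Hp (clipped_cont f r Hr Hf) (clipped_cont g r Hr Hg) n) as HC.
pose proof (MNl_cont p mu _ _ Hp (fun y t => proj1 (HC y t)) (fun y t => proj2 (HC y t))) as HN.
set (N := MNl p mu (fst (Miter p mu g1 g2 (fun y => f (clip r y)) (fun y => g (clip r y)) n))
                   (snd (Miter p mu g1 g2 (fun y => f (clip r y)) (fun y => g (clip r y)) n))) in *.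
pose proof (Miter_agree p mu g1 g2 f g r (fun y H => clip_id r y H) n) as Hag.
split.
- apply ex_RInt_ext with (f := fun s => N (y + t - s) s).
  + rewrite Rmin_left, Rmax_right by lra. intros s Hs.
    unfold N, MNl, Nl. rewrite (Rabs_pos_eq s) by lra.
    assert (Hd : Rabs (y + t - s) + s <= r).
    { replace (y + t - s) with (y + (t - s)) by ring.
      pose proof (Rabs_triang y (t - s)). rewrite (Rabs_pos_eq (t - s)) in H by lra. lra. }
    destruct (Hag (y + t - s) s ltac:(lra) Hd) as [E1 E2]. rewrite E1, E2. reflexivity.
  + apply ex_RInt_c. intros s.
    apply (c2_to_1 (fun a s => N (a - s) s) (y + t)).
    apply (c2_comp N (fun a s => a - s) (fun a s => s)).
    apply continuity_2d_pt_minus. apply continuity_2d_pt_id1. apply continuity_2d_pt_id2.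
    apply continuity_2d_pt_id2. apply HN.
- apply ex_RInt_ext with (f := fun s => N (y - t + s) s).
  + rewrite Rmin_left, Rmax_right by lra. intros s Hs.
    unfold N, MNl, Nl. rewrite (Rabs_pos_eq s) by lra.
    assert (Hd : Rabs (y - t + s) + s <= r).
    { replace (y - t + s) with (y + - (t - s)) by ring.
      pose proof (Rabs_triang y (- (t - s))). rewrite Rabs_Ropp, (Rabs_pos_eq (t - s)) in H by lra. lra. }
    destruct (Hag (y - t + s) s ltac:(lra) Hd) as [E1 E2]. rewrite E1, E2. reflexivity.
  + apply ex_RInt_c. intros s.
    apply (c2_to_1 (fun a s => N (a + s) s) (y - t)).
    apply (c2_comp N (fun a s => a + s) (fun a s => s)).
    apply continuity_2d_pt_plus. apply continuity_2d_pt_id1. apply continuity_2d_pt_id2.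
    apply continuity_2d_pt_id2. apply HN.
Qed.

Definition FF p mu A := Rpower 2 (- p) * Rpower A p - mu / 2 * A.

Lemma NL_lower p mu G A u s : 1 < p -> 0 < mu -> 0 < G ->
  mu / 2 <= Rpower 2 (- p) * Rpower G (p - 1) ->
  G <= A -> A <= u -> 0 <= s ->
  0 <= FF p mu A /\ FF p mu A <= Rpower 2 (- p) * powabs u p - mu / (1 + s) * (u / 2).
Proof.
intros Hp Hmu HG HGp HA Hu Hs.
assert (Hpow : forall x, 0 < x -> Rpower x p = x * Rpower x (p - 1)).
{ intros x Hx. replace p with (1 + (p - 1)) at 1 by ring. rewrite Rpower_plus, Rpower_1; auto. }
assert (Hpa : powabs u p = Rpower u p).
{ unfold powabs. rewrite Rabs_pos_eq by lra. destruct (Rlt_dec 0 u); auto; lra. }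
rewrite Hpa. unfold FF. rewrite !Hpow by lra.
set (k := Rpower 2 (- p)).
assert (Hk : 0 < k) by (unfold k, Rpower; apply exp_pos).
assert (H1 : Rpower G (p - 1) <= Rpower A (p - 1)) by (apply Rle_Rpower_l; lra).
assert (H2 : Rpower A (p - 1) <= Rpower u (p - 1)) by (apply Rle_Rpower_l; lra).
set (a := Rpower A (p - 1)) in *. set (b := Rpower u (p - 1)) in *.
assert (Hka : mu / 2 <= k * a) by (apply Rle_trans with (k * Rpower G (p-1)); auto; apply Rmult_le_compat_l; lra).
assert (Hkb : k * a <= k * b) by (apply Rmult_le_compat_l; lra).
assert (Hs1 : mu / (1 + s) <= mu).
{ unfold Rdiv. rewrite <- (Rmult_1_r mu) at 2. apply Rmult_le_compat_l. lra.
  rewrite <- Rinv_1. apply Rinv_le_contravar; lra. }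
assert (Hmus : 0 <= mu / (1 + s)) by (apply Rlt_le, Rdiv_lt_0_compat; lra).
split.
- replace (k * (A * a) - mu / 2 * A) with (A * (k * a - mu / 2)) by ring.
  apply Rmult_le_pos; lra.
- apply Rle_trans with (u * (k * a - mu / 2)).
  + replace (k * (A * a) - mu / 2 * A) with (A * (k * a - mu / 2)) by ring.
    apply Rmult_le_compat_r; lra.
  + assert (mu / (1 + s) * (u / 2) <= mu * (u / 2)) by (apply Rmult_le_compat_r; lra).
    assert (u * (k * a) <= u * (k * b)) by (apply Rmult_le_compat_l; lra).
    nra.
Qed.

Lemma phi_S p mu g1 g2 f g m y t :
  phi_n p mu g1 g2 f g (S m) y t =
  f (y + t) + RInt (fun s => Nl p mu (phi_n p mu g1 g2 f g m) (psi_n p mu g1 g2 f g m) (y + t - s) s) 0 t.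
Proof. reflexivity. Qed.

Lemma psi_S p mu g1 g2 f g m y t :
  psi_n p mu g1 g2 f g (S m) y t =
  g (y - t) + RInt (fun s => Nl p mu (phi_n p mu g1 g2 f g m) (psi_n p mu g1 g2 f g m) (y - t + s) s) 0 t.
Proof. reflexivity. Qed.

Fixpoint tau (d : nat -> R) (k : nat) : R :=
  match k with O => 0 | S j => tau d j + d j end.

Lemma RInt_lb (h : R -> R) a b c : a <= b -> ex_RInt h a b ->
  (forall s, a < s < b -> c <= h s) -> (b - a) * c <= RInt h a b.
Proof.
intros Hab Hi Hc.
assert (E : RInt (fun _ => c) a b = (b - a) * c) by (rewrite RInt_const; reflexivity).
rewrite <- E. apply RInt_le; auto. apply ex_RInt_const.
Qed.

Lemma staircase p mu g1 g2 f g r (A d : nat -> R) :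
  1 < p -> 0 < mu -> 0 < g1 -> 0 < g2 -> 0 <= r ->
  mu / 2 <= Rpower 2 (- p) * Rpower (g1 + g2) (p - 1) ->
  (forall x, Rabs x <= r ->
     filterlim f (within (fun y => Rabs y <= r) (locally x)) (locally (f x))) ->
  (forall x, Rabs x <= r ->
     filterlim g (within (fun y => Rabs y <= r) (locally x)) (locally (g x))) ->
  (forall x, Rabs x < r -> g1 <= f x /\ g2 <= g x) ->
  A O = g1 + g2 -> (forall k, 0 <= d k) ->
  (forall k, A (S k) = A k + 2 * d k * FF p mu (A k)) ->
  forall k, (g1 + g2 <= A k) /\ exists n, forall m, (n <= m)%nat -> forall y t, 0 <= t -> Rabs y + t < r ->
    tau d k <= t ->
    g1 + (A k - (g1 + g2)) / 2 <= phi_n p mu g1 g2 f g m y t /\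
    g2 + (A k - (g1 + g2)) / 2 <= psi_n p mu g1 g2 f g m y t.
Proof.
intros Hp Hmu Hg1 Hg2 Hr HGp Hf Hg HA2 HA0 Hd HAS.
assert (HG : 0 < g1 + g2) by lra.
assert (Hint := Nint p mu g1 g2 f g r ltac:(lra) Hr Hf Hg).
assert (Htau : forall k, 0 <= tau d k).
{ induction k; simpl; [lra| pose proof (Hd k); lra]. }
assert (Hdom1 : forall y t s, 0 <= s <= t -> Rabs y + t < r -> Rabs (y + t - s) + s < r).
{ intros y t s Hs Hyt. replace (y + t - s) with (y + (t - s)) by ring.
  pose proof (Rabs_triang y (t - s)). rewrite (Rabs_pos_eq (t - s)) in H by lra. lra. }
assert (Hdom2 : forall y t s, 0 <= s <= t -> Rabs y + t < r -> Rabs (y - t + s) + s < r).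
{ intros y t s Hs Hyt. replace (y - t + s) with (y + - (t - s)) by ring.
  pose proof (Rabs_triang y (- (t - s))). rewrite Rabs_Ropp, (Rabs_pos_eq (t - s)) in H by lra. lra. }
induction k as [|k [IHA [n IH]]].
- split; [lra|]. exists O. intros m _. induction m as [|m IHm]; intros y t Ht Hyt _.
  + rewrite HA0. unfold phi_n, psi_n. simpl. lra.
  + rewrite HA0, phi_S, psi_S.
    replace (g1 + (g1 + g2 - (g1 + g2)) / 2) with (g1 + 0) by field.
    replace (g2 + (g1 + g2 - (g1 + g2)) / 2) with (g2 + 0) by field.
    destruct (Hint m y t 0 t Ht ltac:(lra) ltac:(lra) Ht ltac:(lra)) as [I1 I2].
    split; apply Rplus_le_compat.
    * apply HA2. eapply Rle_lt_trans; [apply Rabs_triang|]. rewrite (Rabs_pos_eq t); lra.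
    * apply RInt_ge_0; auto. intros s Hs.
      destruct (IHm (y + t - s) s ltac:(lra) (Hdom1 y t s ltac:(lra) Hyt) ltac:(simpl; lra)) as [L1 L2].
      rewrite HA0 in L1, L2.
      unfold Nl.
      destruct (NL_lower p mu (g1+g2) (g1+g2) (phi_n p mu g1 g2 f g m (y + t - s) s + psi_n p mu g1 g2 f g m (y + t - s) s) s Hp Hmu HG HGp ltac:(lra) ltac:(lra) ltac:(lra)). lra.
    * apply HA2. unfold Rminus. eapply Rle_lt_trans; [apply Rabs_triang|]. rewrite Rabs_Ropp, (Rabs_pos_eq t); lra.
    * apply RInt_ge_0; auto. intros s Hs.
      destruct (IHm (y - t + s) s ltac:(lra) (Hdom2 y t s ltac:(lra) Hyt) ltac:(simpl; lra)) as [L1 L2].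
      rewrite HA0 in L1, L2.
      unfold Nl.
      destruct (NL_lower p mu (g1+g2) (g1+g2) (phi_n p mu g1 g2 f g m (y - t + s) s + psi_n p mu g1 g2 f g m (y - t + s) s) s Hp Hmu HG HGp ltac:(lra) ltac:(lra) ltac:(lra)). lra.
- destruct (NL_lower p mu (g1+g2) (A k) (A k) 0 Hp Hmu HG HGp IHA ltac:(lra) ltac:(lra)) as [HF _].
  assert (HAk : g1 + g2 <= A (S k)) by (rewrite HAS; pose proof (Hd k); nra).
  split; [exact HAk|].
  exists (S n). intros m Hm y t Ht Hyt Htk. destruct m as [|m]; [lia|].
  simpl in Htk. set (tk := tau d k) in *.
  assert (Htk0 : 0 <= tk) by apply Htau. pose proof (Hd k) as Hdk.
  destruct (Hint m y t 0 tk Ht ltac:(lra) ltac:(lra) ltac:(lra) ltac:(pose proof (Hd k); lra)) as [I1 I2].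
  destruct (Hint m y t tk t Ht ltac:(lra) ltac:(lra) ltac:(pose proof (Hd k); lra) ltac:(lra)) as [J1 J2].
  assert (Hlow : forall z s, 0 <= s -> Rabs z + s < r -> tk <= s ->
     FF p mu (A k) <= Nl p mu (phi_n p mu g1 g2 f g m) (psi_n p mu g1 g2 f g m) z s).
  { intros z s Hs Hzs Hks. destruct (IH m ltac:(lia) z s Hs Hzs Hks) as [L1 L2].
    unfold Nl.
    destruct (NL_lower p mu (g1+g2) (A k) (phi_n p mu g1 g2 f g m z s + psi_n p mu g1 g2 f g m z s) s Hp Hmu HG HGp IHA ltac:(lra) Hs). lra. }
  rewrite HAS. split.
  + rewrite phi_S.
    rewrite <- (RInt_Chasles _ 0 tk t I1 J1).
    assert (E : phi_n p mu g1 g2 f g (S m) (y + t - tk) tk =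
      f (y + t) + RInt (fun s => Nl p mu (phi_n p mu g1 g2 f g m) (psi_n p mu g1 g2 f g m) (y + t - s) s) 0 tk).
    { rewrite phi_S. replace (y + t - tk + tk) with (y + t) by ring. reflexivity. }
    destruct (IH (S m) ltac:(lia) (y + t - tk) tk Htk0 (Hdom1 y t tk ltac:(lra) Hyt) ltac:(lra)) as [L1 _].
    rewrite E in L1.
    assert (L2 : (t - tk) * FF p mu (A k) <= RInt (fun s => Nl p mu (phi_n p mu g1 g2 f g m) (psi_n p mu g1 g2 f g m) (y + t - s) s) tk t).
    { apply RInt_lb; auto. lra. intros s Hs. apply Hlow; try lra. apply Hdom1; auto; lra. }
    assert (L3 : d k * FF p mu (A k) <= (t - tk) * FF p mu (A k)) by (apply Rmult_le_compat_r; lra).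
    change (plus ?a ?b) with (a + b). lra.
  + rewrite psi_S.
    rewrite <- (RInt_Chasles _ 0 tk t I2 J2).
    assert (E : psi_n p mu g1 g2 f g (S m) (y - t + tk) tk =
      g (y - t) + RInt (fun s => Nl p mu (phi_n p mu g1 g2 f g m) (psi_n p mu g1 g2 f g m) (y - t + s) s) 0 tk).
    { rewrite psi_S. replace (y - t + tk - tk) with (y - t) by ring.
      replace (y - t + tk - tk) with (y - t) by ring. reflexivity. }
    destruct (IH (S m) ltac:(lia) (y - t + tk) tk Htk0 (Hdom2 y t tk ltac:(lra) Hyt) ltac:(lra)) as [_ L1].
    rewrite E in L1.
    assert (L2 : (t - tk) * FF p mu (A k) <= RInt (fun s => Nl p mu (phi_n p mu g1 g2 f g m) (psi_n p mu g1 g2 f g m) (y - t + s) s) tk t).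
    { apply RInt_lb; auto. lra. intros s Hs. apply Hlow; try lra. apply Hdom2; auto; lra. }
    assert (L3 : d k * FF p mu (A k) <= (t - tk) * FF p mu (A k)) by (apply Rmult_le_compat_r; lra).
    change (plus ?a ?b) with (a + b). lra.
Qed.

Lemma ln_ge_1_inv x : 0 < x -> 1 - / x <= ln x.
Proof.
intros Hx. pose proof (exp_ineq1_le (ln (/ x))). rewrite exp_ln in H by (apply Rinv_0_lt_compat; auto).
rewrite ln_Rinv in H by auto. lra.
Qed.

Lemma step_ineq p mu e z0 z : 1 < p -> 0 < mu -> 0 < e -> 0 < z -> z <= z0 -> z0 < 1 ->
  (exp e - 1) / mu * (z / (1 - z)) <=
  (exp (p * e) * (1 + z0 * (p - 1) / (1 - z0) * e)) / ((p - 1) * mu) *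
  (ln (1 - exp (- (p - 1) * e) * z) - ln (1 - z)).
Proof.
intros Hp Hmu He Hz Hzz Hz0.
set (a := exp (- (p - 1) * e)).
set (E := exp e).
assert (Ha0 : 0 < a) by apply exp_pos.
assert (Ha1 : a + (p - 1) * e * a <= 1).
{ assert (H := exp_ineq1_le ((p - 1) * e)).
  assert (Hinv : exp ((p - 1) * e) * a = 1).
  { unfold a. rewrite <- exp_plus. replace ((p - 1) * e + - (p - 1) * e) with 0 by ring. apply exp_0. }
  nra. }
assert (Ha2 : 1 - (p - 1) * e <= a) by (pose proof (exp_ineq1_le (- (p - 1) * e)); unfold a; lra).
assert (HE : E - 1 <= e * E).
{ assert (H := exp_ineq1_le (- e)). assert (Hinv : exp (- e) * E = 1).
  { unfold E. rewrite <- exp_plus. replace (- e + e) with 0 by ring. apply exp_0. }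
  assert (0 < E) by apply exp_pos. nra. }
assert (HE1 : 1 <= E) by (pose proof (exp_ineq1_le e); unfold E; lra).
assert (Hrho : exp (p * e) * a = E).
{ unfold a, E. rewrite <- exp_plus. f_equal. ring. }
assert (Haz : 0 < 1 - a * z).
{ assert (0 < (p - 1) * e * a) by (apply Rmult_lt_0_compat; [apply Rmult_lt_0_compat|]; lra). assert (a < 1) by lra. assert (a * z < 1 * 1) by (apply Rmult_le_0_lt_compat; lra). lra. }
assert (HL : z * (1 - a) / (1 - a * z) <= ln (1 - a * z) - ln (1 - z)).
{ rewrite <- ln_div by lra. eapply Rle_trans. 2: apply ln_ge_1_inv; apply Rdiv_lt_0_compat; lra.
  right. field. split; lra. }
set (C := z0 * (p - 1) / (1 - z0)).
assert (HC : z * (1 - a) <= C * e * (1 - z)).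
{ unfold C. apply Rle_trans with (z * ((p - 1) * e)). apply Rmult_le_compat_l; lra.
  apply Rmult_le_reg_r with (1 - z0). lra.
  replace (z0 * (p - 1) / (1 - z0) * e * (1 - z) * (1 - z0)) with (z0 * (p - 1) * e * (1 - z)) by (field; lra).
  assert (0 < (p - 1) * e) by nra. nra. }
set (rho := exp (p * e) * (1 + C * e)).
assert (Hrp : 0 < rho) by (unfold rho; assert (0 <= C) by (unfold C; apply Rmult_le_pos; [nra| left; apply Rinv_0_lt_compat; lra]); pose proof (exp_pos (p * e)); nra).
assert (Hmain : (E - 1) * (p - 1) * (1 - a * z) <= rho * (1 - a) * (1 - z)).
{ apply Rle_trans with (e * E * (p - 1) * (1 - a * z)).
  { apply Rmult_le_compat_r. lra. apply Rmult_le_compat_r. lra. exact HE. }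
  apply Rle_trans with (rho * ((p - 1) * e * a) * (1 - z)).
  { replace (rho * ((p - 1) * e * a) * (1 - z)) with ((p - 1) * e * (exp (p * e) * a) * (1 + C * e) * (1 - z)) by (unfold rho; ring).
    rewrite Hrho.
    assert (0 < (p - 1) * e * E) by (assert (0 < (p-1) * e) by nra; nra).
    assert (1 - a * z <= (1 + C * e) * (1 - z)) by nra.
    replace (e * E * (p - 1) * (1 - a * z)) with ((p - 1) * e * E * (1 - a * z)) by ring.
    replace ((p - 1) * e * E * (1 + C * e) * (1 - z)) with ((p - 1) * e * E * ((1 + C * e) * (1 - z))) by ring.
    apply Rmult_le_compat_l; lra. }
  apply Rmult_le_compat_r. lra. apply Rmult_le_compat_l. lra. lra. }
fold C. fold rho.
apply Rle_trans with (rho / ((p - 1) * mu) * (z * (1 - a) / (1 - a * z))).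
2:{ apply Rmult_le_compat_l; auto. apply Rlt_le, Rdiv_lt_0_compat; nra. }
apply Rmult_le_reg_r with ((p - 1) * mu * (1 - z) * (1 - a * z) / z).
{ apply Rdiv_lt_0_compat; auto. apply Rmult_lt_0_compat; [|lra]. apply Rmult_lt_0_compat; nra. }
replace ((E - 1) / mu * (z / (1 - z)) * ((p - 1) * mu * (1 - z) * (1 - a * z) / z))
  with ((E - 1) * (p - 1) * (1 - a * z)) by (field; repeat split; lra).
replace (rho / ((p - 1) * mu) * (z * (1 - a) / (1 - a * z)) * ((p - 1) * mu * (1 - z) * (1 - a * z) / z))
  with (rho * (1 - a) * (1 - z)) by (field; repeat split; lra).
exact Hmain.
Qed.

Lemma FF_step p mu A E : 0 < A -> 0 < mu ->
  Rpower 2 (1 - p) = 2 * Rpower 2 (- p) ->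
  mu * Rpower A (1 - p) / Rpower 2 (1 - p) < 1 ->
  A + 2 * ((E - 1) / mu * ((mu * Rpower A (1 - p) / Rpower 2 (1 - p)) /
     (1 - mu * Rpower A (1 - p) / Rpower 2 (1 - p)))) * FF p mu A = A * E.
Proof.
intros HA Hmu Hc Hz. unfold FF.
assert (HWX : Rpower A (1 - p) * Rpower A p = A).
{ rewrite <- Rpower_plus. replace (1 - p + p) with 1 by ring. apply Rpower_1; auto. }
rewrite Hc in *.
set (Q := Rpower 2 (- p)) in *.
assert (HQ : 0 < Q) by (unfold Q, Rpower; apply exp_pos).
set (W := Rpower A (1 - p)) in *. set (X := Rpower A p) in *.
assert (HW : 0 < W) by (unfold W, Rpower; apply exp_pos).
assert (HX : 0 < X) by (unfold X, Rpower; apply exp_pos).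
rewrite <- HWX.
assert (Hd : 2 * Q - mu * W <> 0).
{ assert (mu * W / (2 * Q) * (2 * Q) < 1 * (2 * Q)) by (apply Rmult_lt_compat_r; lra).
  replace (mu * W / (2 * Q) * (2 * Q)) with (mu * W) in H by (field; lra). lra. }
field. repeat split; try lra.
Qed.

Lemma sup_sum_infty (u v : nat -> R) :
  (forall M, exists n, M <= u n + v n) ->
  Rbar_lt (Rbar_plus (Sup_seq (fun n => u n)) (Sup_seq (fun n => v n))) p_infty -> False.
Proof.
intros HM.
pose proof (Sup_seq_correct (fun n => u n)) as Su.
pose proof (Sup_seq_correct (fun n => v n)) as Sv.
destruct (Sup_seq (fun n => u n)) as [a| |]; destruct (Sup_seq (fun n => v n)) as [b| |]; simpl; auto.
all: intros Hlt.
all: try (specialize (Su (u O) O); simpl in Su; lra).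
all: try (specialize (Sv (v O) O); simpl in Sv; lra).
all: try (simpl in Hlt; contradiction).
destruct (HM (a + b + 2)) as [n Hn].
destruct (Su (mkposreal 1 Rlt_0_1)) as [H1 _]. destruct (Sv (mkposreal 1 Rlt_0_1)) as [H2 _].
specialize (H1 n). specialize (H2 n). simpl in H1, H2. lra.
Qed.

Theorem lemma4p4 (p mu Rs Ts g1 g2 eps0 : R) (f g : R -> R) :
  1 < p -> 0 < mu -> p < 1 + 2 / mu ->
  0 < Rs -> 0 < Ts ->
  0 < g1 -> 0 < g2 ->
  g1 + g2 > Rmax 1 (Rpower (mu * p * Rpower 2 p) (/ (p - 1))) ->
  (* (A1) *)
  T1 p mu g1 g2 < Ts ->
  (* (A2) *)
  (forall x, Rabs x < Rs + Ts -> g1 <= f x /\ g2 <= g x) ->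
  (* (A3) *)
  C4_closed_ball (Rs + Ts) f -> C4_closed_ball (Rs + Ts) g ->
  (* (A4) *)
  0 < eps0 ->
  (forall x, Rabs x < Rs + Ts ->
     (2 + eps0) * (Rabs (Derive f x) + Rabs (Derive g x))
     <= Rpower 2 (- p) * Rpower (g1 + g2) p - mu / 2 * (g1 + g2)) ->
  forall x, Rabs x < Rs ->
    Rbar_lt (blowup_time p mu g1 g2 f g Ts x) (Finite Ts).
Proof.
intros Hp Hmu _ HRs HTs Hg1 Hg2 HG HT1 HA2 Hf4 Hg4 _ _ x Hx.
set (G := g1 + g2) in *.
assert (HG0 : 0 < G) by (unfold G; lra).
set (X := mu * p * Rpower 2 p).
assert (HX : 0 < X) by (unfold X; assert (0 < Rpower 2 p) by (unfold Rpower; apply exp_pos); apply Rmult_lt_0_compat; [apply Rmult_lt_0_compat|]; lra).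
set (P := Rpower G (p - 1)).
assert (HP : X < P).
{ assert (H1 : Rpower X (/ (p - 1)) < G) by (eapply Rle_lt_trans; [apply Rmax_r| exact HG]).
  assert (H2 : 0 < Rpower X (/ (p - 1))) by (unfold Rpower; apply exp_pos).
  pose proof (Rlt_Rpower_l _ _ (p - 1) ltac:(lra) (conj H2 H1)) as H3.
  rewrite Rpower_mult, Rinv_l, Rpower_1 in H3 by lra. exact H3. }
set (Q := Rpower 2 (- p)).
assert (HQ : 0 < Q) by (unfold Q, Rpower; apply exp_pos).
assert (HQ2 : Q * Rpower 2 p = 1).
{ unfold Q. rewrite <- Rpower_plus. replace (- p + p) with 0 by ring. apply Rpower_O; lra. }
assert (HQP : mu * p < Q * P).
{ apply Rmult_lt_reg_r with (Rpower 2 p). unfold Rpower; apply exp_pos.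
  replace (Q * P * Rpower 2 p) with (P * (Q * Rpower 2 p)) by ring. rewrite HQ2.
  unfold X in HP. lra. }
assert (HGp : mu / 2 <= Rpower 2 (- p) * Rpower G (p - 1)) by (fold Q P; nra).
set (c := Rpower 2 (1 - p)).
assert (Hc : c = 2 * Q).
{ unfold c, Q. replace (1 - p) with (1 + - p) by ring. rewrite Rpower_plus, Rpower_1; lra. }
assert (HWP : forall A, 0 < A -> Rpower A (1 - p) = / Rpower A (p - 1)).
{ intros A HA. replace (1 - p) with (- (p - 1)) by ring. apply Rpower_Ropp. }
set (z0 := mu * Rpower G (1 - p) / c).
assert (Hz0 : 0 < z0 /\ z0 < 1).
{ unfold z0. rewrite HWP, Hc by auto. fold P.
  assert (0 < P) by lra.
  replace (mu * / P / (2 * Q)) with (mu / (2 * (Q * P))) by (field; lra).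
  split. apply Rdiv_lt_0_compat; nra.
  apply Rmult_lt_reg_r with (2 * (Q * P)). nra.
  replace (mu / (2 * (Q * P)) * (2 * (Q * P))) with mu by (field; lra). nra. }
assert (HT1e : T1 p mu g1 g2 = - ln (1 - z0) / ((p - 1) * mu)).
{ unfold T1. fold G c.
  assert (HW : 0 < Rpower G (1 - p)) by (unfold Rpower; apply exp_pos).
  assert (Hcp : 0 < c) by (rewrite Hc; lra).
  replace (c / mu / (c / mu - Rpower G (1 - p))) with (/ (1 - z0)).
  rewrite ln_Rinv by lra. unfold Rdiv. ring.
  unfold z0. field. repeat split; try lra.
  intro H. assert (mu * Rpower G (1 - p) / c = 1).
  { apply Rmult_eq_reg_r with c; [|lra]. unfold Rdiv. rewrite Rmult_assoc, Rinv_l by lra. lra. }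
  fold z0 in H0. lra. }
assert (HT1p : 0 < T1 p mu g1 g2).
{ rewrite HT1e. assert (ln (1 - z0) < 0) by (rewrite <- ln_1; apply ln_increasing; lra).
  apply Rdiv_lt_0_compat; nra. }
set (T := T1 p mu g1 g2) in *.
set (lam := Ts / T).
assert (Hlam : 1 < lam).
{ unfold lam. apply Rmult_lt_reg_r with T; auto. unfold Rdiv. rewrite Rmult_assoc, Rinv_l by lra. lra. }
set (C := z0 * (p - 1) / (1 - z0)).
assert (HC : 0 <= C) by (unfold C; apply Rmult_le_pos; [nra| left; apply Rinv_0_lt_compat; lra]).
set (e := (lam - 1) / (2 * (C + lam * p))).
assert (He : 0 < e) by (unfold e; apply Rdiv_lt_0_compat; nra).
assert (Hep : e * (C + lam * p) = (lam - 1) / 2) by (unfold e; field; nra).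
set (rho := exp (p * e) * (1 + C * e)).
assert (Hrho : rho < lam).
{ assert (H1 : 1 - p * e <= exp (- (p * e))) by (pose proof (exp_ineq1_le (- (p * e))); lra).
  assert (H2 : exp (- (p * e)) * exp (p * e) = 1) by (rewrite <- exp_plus; replace (- (p * e) + p * e) with 0 by ring; apply exp_0).
  assert (Hpe : p * e < 1) by nra.
  assert (H3 : (1 - p * e) * exp (p * e) <= 1).
  { pose proof (exp_pos (p * e)). nra. }
  unfold rho. 
  assert (H4 : 1 + C * e < lam * (1 - p * e)) by nra.
  assert (0 <= 1 + C * e) by nra.
  assert (exp (p * e) * (1 + C * e) * (1 - p * e) <= 1 + C * e) by nra.
  nra. }
assert (Hr0 : 0 < rho).
{ unfold rho. assert (0 <= C * e) by (apply Rmult_le_pos; lra). pose proof (exp_pos (p * e)).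
  apply Rmult_lt_0_compat; lra. }
set (A := fun k : nat => G * exp (INR k * e)).
set (zk := fun k => mu * Rpower (A k) (1 - p) / c).
set (d := fun k => (exp e - 1) / mu * (zk k / (1 - zk k))).
assert (HA : forall k, G <= A k).
{ intros k. unfold A. assert (1 <= exp (INR k * e)).
  { pose proof (exp_ineq1_le (INR k * e)). pose proof (pos_INR k). nra. } nra. }
assert (Hzk : forall k, 0 < zk k <= z0).
{ intros k. unfold zk, z0. assert (0 < c) by (rewrite Hc; lra). split.
  - apply Rdiv_lt_0_compat; auto. apply Rmult_lt_0_compat; auto. unfold Rpower; apply exp_pos.
  - unfold Rdiv. apply Rmult_le_compat_r. left; apply Rinv_0_lt_compat; auto.
    apply Rmult_le_compat_l. lra. rewrite !HWP by (try apply HG0; pose proof (HA k); lra).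
    apply Rinv_le_contravar. unfold Rpower; apply exp_pos.
    apply Rle_Rpower_l. lra. split; auto. }
assert (Hd : forall k, 0 <= d k).
{ intros k. unfold d. destruct (Hzk k). pose proof (exp_ineq1_le e).
  apply Rmult_le_pos. apply Rmult_le_pos. lra. left; apply Rinv_0_lt_compat; lra.
  apply Rlt_le, Rdiv_lt_0_compat; lra. }
assert (HAS0 : forall k, A (S k) = A k * exp e).
{ intros k. unfold A. rewrite S_INR. rewrite Rmult_plus_distr_r, Rmult_1_l, exp_plus. ring. }
assert (HAS : forall k, A (S k) = A k + 2 * d k * FF p mu (A k)).
{ intros k. rewrite HAS0. unfold d, zk. symmetry. apply FF_step.
  pose proof (HA k); lra. auto. fold c Q. auto. fold c. destruct (Hzk k). unfold zk in *. lra. }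
assert (HzS : forall k, zk (S k) = exp (- (p - 1) * e) * zk k).
{ intros k. unfold zk. rewrite HAS0. rewrite <- Rpower_mult_distr.
  2: pose proof (HA k); lra. 2: apply exp_pos.
  replace (Rpower (exp e) (1 - p)) with (exp (- (p - 1) * e)). field. rewrite Hc; lra.
  unfold Rpower. rewrite ln_exp. f_equal. ring. }
set (K := rho / ((p - 1) * mu)).
assert (Htau : forall k, tau d k <= K * (ln (1 - zk k) - ln (1 - z0))).
{ induction k as [|k IH].
  - simpl. unfold zk. replace (A O) with G by (unfold A; simpl; rewrite Rmult_0_l, exp_0; ring).
    fold z0. lra.
  - simpl. destruct (Hzk k) as [Hz1 Hz2].
    pose proof (step_ineq p mu e z0 (zk k) Hp Hmu He Hz1 Hz2 (proj2 Hz0)) as Hs.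
    fold C rho K in Hs. rewrite <- HzS in Hs. unfold d at 2. lra. }
set (B := rho * T).
assert (HB : forall k, tau d k <= B).
{ intros k. eapply Rle_trans. apply Htau. unfold B. rewrite HT1e.
  destruct (Hzk k). assert (ln (1 - zk k) <= 0) by (rewrite <- ln_1; apply ln_le; lra).
  assert (0 < K) by (unfold K; apply Rdiv_lt_0_compat; nra).
  replace (rho * (- ln (1 - z0) / ((p - 1) * mu))) with (K * (- ln (1 - z0))) by (unfold K; field; nra).
  apply Rmult_le_compat_l; lra. }
assert (HBT : B < Ts) by (unfold B; unfold lam in Hrho; apply Rmult_lt_reg_r with (/ T);
  [apply Rinv_0_lt_compat; lra| rewrite Rmult_assoc, Rinv_r by lra; lra]).
assert (HB0 : 0 <= B) by (unfold B; nra).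
destruct Hf4 as [Hf _]. destruct Hg4 as [Hg _].
pose proof (staircase p mu g1 g2 f g (Rs + Ts) A d Hp Hmu Hg1 Hg2 ltac:(lra) HGp Hf Hg HA2
  ltac:(unfold A; simpl; rewrite Rmult_0_l, exp_0; unfold G; ring) Hd HAS) as Hst.
assert (Hinf : forall t, B < t < Ts -> forall M, exists n,
   M <= phi_n p mu g1 g2 f g n x t + psi_n p mu g1 g2 f g n x t).
{ intros t Ht M.
  destruct (nfloor_ex (Rmax 0 (M / (G * e)))) as [k Hk]. apply Rmax_l.
  destruct (Hst (S k)) as [_ [n Hn]].
  exists n. destruct (Hn n (le_n n) x t ltac:(lra) ltac:(lra) ltac:(pose proof (HB (S k)); lra)) as [L1 L2].
  assert (HAk : M <= A (S k)).
  { unfold A. pose proof (exp_ineq1_le (INR (S k) * e)). rewrite S_INR in *.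
    assert (M / (G * e) < INR k + 1) by (pose proof (Rmax_r 0 (M / (G * e))); lra).
    assert (M < (INR k + 1) * (G * e)).
    { apply Rmult_lt_reg_r with (/ (G * e)). apply Rinv_0_lt_compat; nra.
      rewrite Rmult_assoc, Rinv_r by nra. unfold Rdiv in H0. lra. }
    pose proof (pos_INR k). nra. }
  unfold G in *. lra. }
unfold blowup_time.
destruct (Lub_Rbar_correct (fun t => 0 < t <= Ts /\ forall tau, 0 < tau < t ->
      Rbar_lt (Rbar_plus (phi_sup p mu g1 g2 f g x tau) (psi_sup p mu g1 g2 f g x tau)) p_infty)) as [_ Hlub].
apply Rbar_le_lt_trans with (Finite B). 2: simpl; exact HBT. apply Hlub.
intros t [Ht Hall]. simpl.
destruct (Rle_dec t B) as [|Hnot]; auto. exfalso.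
set (tau0 := (B + t) / 2).
apply (sup_sum_infty (fun n => phi_n p mu g1 g2 f g n x tau0) (fun n => psi_n p mu g1 g2 f g n x tau0)).
- apply Hinf. unfold tau0; lra.
- apply (Hall tau0). unfold tau0; lra.
Qed.
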